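(* Let $\lambda:=\ell\inf_{r\ge r_0}\frac{d\sqrt{f}}{dr}$. Then $\lambda=1$ if $K\in\{-1,0\}$ and $\lambda\in(0,1)$ if $K=1$, and for every smooth compactly supported function $u$ on $\mathbb R^2$, $$\int_{\mathbb R^2}|\nabla u|^2_{{}^2g}\,d\mu_{{}^2g}\ \ge\ \frac{\lambda^2}{4\ell^2}\int_{\mathbb R^2}u^2\,d\mu_{{}^2g},$$ i.e. the first $L^2$-eigenvalue of $\nabla^*\nabla$ on functions on $(\mathbb R^2,{}^2g)$ is at least $\lambda^2/(4\ell^2)$.
   Context: Fix an integer $n\ge2$, constants $\ell>0$, $K\in\{-1,0,1\}$, $\mu\in\mathbb R$. Set $f(r)=\frac{r^2}{\ell^2}+K-\frac{2\mu}{r^{n-1}}$. Assume $\mu>0$ if $K\in\{0,1\}$ and $\mu>\mu_{\min}:=-\frac{1}{n+1}\big(\frac{n+1}{\ell^2(n-1)}\big)^{\frac{1-n}{2}}$ if $K=-1$; let $r_0>0$ be the largest zero of $f$ (simple; $f>0,f'>0$ on $(r_0,\infty)$). Let ${}^2g=f(r)dt^2+f(r)^{-1}dr^2$ on $\mathbb R^2$, with $r\in[r_0,\infty)$, $t$ periodic of period $4\pi/f'(r_0)$, $(r,t)$ polar-type coordinates centred at $r=r_0$. *)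

(* Defs.v *)
From Stdlib Require Import Reals Lra.
Open Scope R_scope.

Definition fBH (n : nat) (l K mu r : R) : R :=
  r ^ 2 / l ^ 2 + K - 2 * mu / r ^ (n - 1).

Definition mu_min (n : nat) (l : R) : R :=
  - (1 / (INR n + 1)) *
    Rpower ((INR n + 1) / (l ^ 2 * (INR n - 1))) ((1 - INR n) / 2).

Definition is_glb (E : R -> Prop) (m : R) : Prop :=
  (forall x, E x -> m <= x) /\ (forall b, (forall x, E x -> b <= x) -> b <= m).

Definition lam_set (n : nat) (l K mu r0 : R) (y : R) : Prop :=
  exists r d, r0 <= r /\
    derivable_pt_lim (fun s => sqrt (fBH n l K mu s)) r d /\ y = l * d.

Definition continuous2 (u : R -> R -> R) : Prop :=
  forall x y eps, 0 < eps -> exists delta, 0 < delta /\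
    forall x' y', Rabs (x' - x) < delta -> Rabs (y' - y) < delta ->
      Rabs (u x' y' - u x y) < eps.

Fixpoint Ck (k : nat) (u : R -> R -> R) : Prop :=
  match k with
  | O => continuous2 u
  | S k' => continuous2 u /\
      exists ux uy : R -> R -> R,
        (forall x y, derivable_pt_lim (fun s => u s y) x (ux x y)) /\
        (forall x y, derivable_pt_lim (fun s => u x s) y (uy x y)) /\
        Ck k' ux /\ Ck k' uy
  end.

Definition smooth2 (u : R -> R -> R) : Prop := forall k, Ck k u.

Definition compact_support2 (u : R -> R -> R) : Prop :=
  exists M, forall x y, M < Rabs x \/ M < Rabs y -> u x y = 0.

(* u (given in Cartesian coordinates of R^2) read in the (r,t) coordinates:
   x = rho(r) cos(kappa t), y = rho(r) sin(kappa t) *)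
Definition in_rt (rho : R -> R) (kappa : R) (u : R -> R -> R) (r t : R) : R :=
  u (rho r * cos (kappa * t)) (rho r * sin (kappa * t)).

(* |grad u|^2_g for g = f dt^2 + f^{-1} dr^2, given u_r, u_t *)
Definition grad_sq (fr ur ut : R) : R := fr * ur ^ 2 + ut ^ 2 / fr.

Definition RInt_eq (g : R -> R) (a b I : R) : Prop :=
  exists pr : Riemann_integrable g a b, RiemannInt pr = I.

(* Main.v *)
From Coquelicot Require Import Coquelicot.
Require Import Defs.
From Stdlib Require Import Reals Lra Psatz.
Open Scope R_scope.

Definition ff (k : nat) (l K mu r : R) : R := r ^ 2 / l ^ 2 + K - 2 * mu / r ^ (S k).
Definition fp (k : nat) (l mu r : R) : R := 2 * r / l ^ 2 + 2 * (INR k + 1) * mu / (r * r * r ^ k).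

Lemma fBH_ff k l K mu r : fBH (S (S k)) l K mu r = ff k l K mu r.
Proof. unfold fBH, ff. simpl (S (S k) - 1)%nat. reflexivity. Qed.

Lemma ff_deriv k l K mu r : 0 < r -> 0 < l -> derivable_pt_lim (ff k l K mu) r (fp k l mu r).
Proof.
  intros Hr Hl. apply is_derive_Reals. unfold ff, fp.
  assert (Hp : 0 < r ^ k) by (apply pow_lt; lra).
  auto_derive.
  - simpl. apply Rgt_not_eq. apply Rmult_lt_0_compat; lra.
  - replace (match k with | 0%nat => 1 | S _ => INR k + 1 end) with (INR k + 1)
      by (destruct k; simpl; try ring; rewrite S_INR; ring).
    field. split; lra.
Qed.
Lemma ff_cont k l K mu r : 0 < r -> 0 < l -> continuity_pt (ff k l K mu) r.
Proof. intros. apply derivable_continuous_pt. exists (fp k l mu r). apply ff_deriv; auto. Qed.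

Lemma pow_ge1 (x : R) (j : nat) : 1 <= x -> 1 <= x ^ j.
Proof. intros. apply pow_R1_Rle. auto. Qed.

Lemma pow_ge_self (x : R) (j : nat) : 1 <= x -> x <= x ^ (S j).
Proof. intros. simpl. assert (1 <= x ^ j) by (apply pow_R1_Rle; auto). nra. Qed.

Lemma ff_pos_big k l K mu r : 0 < l -> -1 <= K ->
  1 <= r -> l * (2 + 2 * Rabs mu) <= r -> 0 < ff k l K mu r.
Proof.
  intros Hl HK H1 H2. unfold ff.
  assert (HX : 1 <= r ^ (S k)) by (apply pow_R1_Rle; lra).
  assert (Hm : 2 * mu / r ^ (S k) <= 2 * Rabs mu).
  { apply Rle_trans with (2 * Rabs mu / r ^ S k).
    - unfold Rdiv. apply Rmult_le_compat_r. left; apply Rinv_0_lt_compat; lra.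
      pose proof (Rle_abs mu); lra.
    - unfold Rdiv. pose proof (Rabs_pos mu).
      assert (/ r ^ S k <= 1). { rewrite <- Rinv_1. apply Rinv_le_contravar; lra. }
      nra. }
  assert (Hq : r / l >= 2 + 2 * Rabs mu).
  { apply Rle_ge. apply Rmult_le_reg_r with l; auto. unfold Rdiv. rewrite Rmult_assoc, Rinv_l; lra. }
  assert (r ^ 2 / l ^ 2 = (r / l) * (r / l)) by (field; lra).
  pose proof (Rabs_pos mu). nra.
Qed.

Definition clamp (a x : R) := (a + x + Rabs (x - a)) / 2.

Lemma clamp_ge a x : a <= clamp a x.
Proof. unfold clamp. pose proof (Rle_abs (x - a)). pose proof (Rle_abs (-(x-a))). rewrite Rabs_Ropp in H0. lra. Qed.

Lemma clamp_id a x : a <= x -> clamp a x = x.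
Proof. intros. unfold clamp. rewrite Rabs_right; lra. Qed.

Lemma clamp_lip a x y : Rabs (clamp a y - clamp a x) <= Rabs (y - x).
Proof.
  unfold clamp. 
  destruct (Rle_dec a x); destruct (Rle_dec a y);
  [rewrite (Rabs_right (x-a)), (Rabs_right (y-a)) by lra|
   rewrite (Rabs_right (x-a)), (Rabs_left (y-a)) by lra|
   rewrite (Rabs_left (x-a)), (Rabs_right (y-a)) by lra|
   rewrite (Rabs_left (x-a)), (Rabs_left (y-a)) by lra];
  unfold Rabs; repeat destruct Rcase_abs; lra.
Qed.

Lemma clamp_cont a : continuity (clamp a).
Proof.
  intro x. apply continuity_pt_locally. intro eps. exists eps. intros y Hy.
  eapply Rle_lt_trans. apply clamp_lip. apply Hy.
Qed.

Lemma ff_pos k l K mu r0 : 0 < l -> -1 <= K -> 0 < r0 ->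
  (forall r, r0 < r -> ff k l K mu r <> 0) -> forall r, r0 < r -> 0 < ff k l K mu r.
Proof.
  intros Hl HK Hr0 Hnz r Hr.
  destruct (Rtotal_order 0 (ff k l K mu r)) as [H|[H|H]]; auto.
  - exfalso. apply (Hnz r Hr). auto.
  - exfalso.
    set (R1 := r + 1 + l * (2 + 2 * Rabs mu)).
    assert (HR1 : 0 < ff k l K mu R1).
    { apply ff_pos_big; auto; unfold R1; pose proof (Rabs_pos mu); nra. }
    set (g := fun x => ff k l K mu (clamp r x)).
    assert (Hg : continuity g).
    { intro x. unfold g. apply (continuity_pt_comp (clamp r) (ff k l K mu)). apply clamp_cont.
      apply ff_cont; auto. pose proof (clamp_ge r x); lra. }
    assert (HR1r : r < R1) by (unfold R1; pose proof (Rabs_pos mu); nra).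
    destruct (IVT g r R1 Hg HR1r) as [z [Hz1 Hz2]].
    + unfold g. rewrite clamp_id; lra.
    + unfold g. rewrite clamp_id; lra.
    + unfold g in Hz2. rewrite clamp_id in Hz2 by lra. apply (Hnz z); auto; lra.
Qed.
Lemma deriv_nonneg_right (f : R -> R) x d : f x = 0 -> (forall y, x < y -> 0 < f y) ->
  derivable_pt_lim f x d -> 0 <= d.
Proof.
  intros H0 Hp Hd. destruct (Rle_or_lt 0 d) as [?|Hneg]; auto. exfalso.
  destruct (Hd (- d / 2)) as [del Hdel]; [lra|].
  set (h := del / 2).
  assert (Hh : 0 < h) by (unfold h; destruct del; simpl; lra).
  specialize (Hdel h). assert (h <> 0) by lra.
  assert (Rabs h < del) by (rewrite Rabs_right by lra; unfold h; destruct del; simpl; lra).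
  specialize (Hdel H H1). rewrite H0 in Hdel.
  specialize (Hp (x + h)). assert (0 < f (x + h)) by (apply Hp; lra).
  assert (0 < (f (x + h) - 0) / h) by (apply Rdiv_lt_0_compat; lra).
  pose proof (Rle_abs ((f (x + h) - 0) / h - d)). lra.
Qed.

Lemma crit_mu k l K mu r0 : 0 < l -> 0 < r0 -> (K = -1 \/ K = 0 \/ K = 1) ->
  ff k l K mu r0 = 0 -> fp k l mu r0 = 0 -> mu = mu_min (S (S k)) l.
Proof.
  intros Hl Hr HK Hf Hd. unfold ff, fp in *.
  set (N := INR k + 2).
  assert (HN : 2 <= N) by (unfold N; pose proof (pos_INR k); lra).
  assert (HP : 0 < r0 ^ k) by (apply pow_lt; auto).
  replace (r0 ^ S k) with (r0 * r0 ^ k) in Hf by (simpl; ring).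
  unfold mu_min. replace (r0 ^ S k) with (r0 * r0 ^ k) by (simpl; ring).
  remember (r0 ^ k) as P eqn:HPdef.
  replace (INR k + 1) with (N - 1) in Hd by (unfold N; ring).
  assert (Hd' : (2 * r0 / l ^ 2 + 2 * (N - 1) * mu / (r0 * r0 * P)) * (l ^ 2 * r0 * r0 * P) = 0)
    by (rewrite Hd; ring).
  replace ((2 * r0 / l ^ 2 + 2 * (N - 1) * mu / (r0 * r0 * P)) * (l ^ 2 * r0 * r0 * P))
    with (2 * r0 ^ 3 * P + 2 * (N - 1) * mu * l ^ 2) in Hd' by (field; split; lra).
  assert (Hf' : (r0 ^ 2 / l ^ 2 + K - 2 * mu / (r0 * P)) * (l ^ 2 * r0 * P) = 0)
    by (rewrite Hf; ring).
  replace ((r0 ^ 2 / l ^ 2 + K - 2 * mu / (r0 * P)) * (l ^ 2 * r0 * P))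
    with (r0 ^ 3 * P + K * l ^ 2 * r0 * P - 2 * mu * l ^ 2) in Hf' by (field; split; lra).
  assert (HK1 : (N - 1) * (r0 ^ 3 * P + K * l ^ 2 * r0 * P) + 2 * r0 ^ 3 * P = 0) by nra.
  assert (HK2 : (N - 1) * K * l ^ 2 + (N + 1) * r0 ^ 2 = 0).
  { assert (0 < r0 * P) by nra.
    apply Rmult_eq_reg_r with (r0 * P); [|lra]. nra. }
  assert (HKm : K = -1).
  { destruct HK as [?|[?|?]]; auto; subst K; exfalso; nra. }
  subst K.
  assert (Hr2 : r0 ^ 2 = (N - 1) * l ^ 2 / (N + 1)).
  { apply Rmult_eq_reg_r with (N + 1); [|lra]. unfold Rdiv. rewrite Rmult_assoc, Rinv_l by lra. lra. }
  assert (Hmu : mu = - r0 * P / (N + 1)).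
  { apply Rmult_eq_reg_r with (2 * (N - 1) * l ^ 2). 2: nra.
    replace (- r0 * P / (N + 1) * (2 * (N - 1) * l ^ 2)) with (- 2 * r0 * P * ((N-1) * l ^ 2 / (N + 1))) by (field; lra).
    rewrite <- Hr2. nra. }
  rewrite Hmu.
  replace (INR (S (S k))) with N by (unfold N; rewrite !S_INR; ring).
  replace ((N + 1) / (l ^ 2 * (N - 1))) with (Rpower r0 (- INR 2)).
  2:{ rewrite Rpower_Ropp, Rpower_pow by lra. rewrite Hr2. field. split; lra. }
  rewrite Rpower_mult.
  replace (- INR 2 * ((1 - N) / 2)) with (INR (S k)) by (unfold N; rewrite S_INR; simpl; field).
  rewrite Rpower_pow by lra. rewrite HPdef. simpl. field. lra.
Qed.
Definition Hf (k : nat) (l K mu r : R) := l * fp k l mu r / (2 * sqrt (ff k l K mu r)).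
Definition Df (k : nat) (l K mu r : R) :=
  2 * (INR k + 2) * mu / (r * r ^ k) + (INR k + 1) ^ 2 * mu ^ 2 * l ^ 2 / (r ^ 2 * (r * r ^ k) ^ 2) - K.

Lemma Df_id k l K mu r : 0 < r -> 0 < l -> (l * fp k l mu r / 2) ^ 2 = ff k l K mu r + Df k l K mu r.
Proof.
  intros Hr Hl. assert (0 < r ^ k) by (apply pow_lt; auto).
  unfold fp, ff, Df. simpl (r ^ S k). field. repeat split; lra.
Qed.

Lemma H_ge1 k l K mu r : 0 < r -> 0 < l -> 0 < ff k l K mu r -> 0 < fp k l mu r ->
  0 <= Df k l K mu r -> 1 <= Hf k l K mu r.
Proof.
  intros Hr Hl Hf0 Hp HD. unfold Hf.
  pose proof (Df_id k l K mu r Hr Hl) as Hid.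
  set (a := l * fp k l mu r / 2) in *.
  assert (Ha : 0 < a) by (unfold a; apply Rdiv_lt_0_compat; [apply Rmult_lt_0_compat|]; lra).
  assert (Hs : sqrt (ff k l K mu r) <= a).
  { rewrite <- (sqrt_pow2 a) by lra. apply sqrt_le_1_alt. lra. }
  assert (Hs0 : 0 < sqrt (ff k l K mu r)) by (apply sqrt_lt_R0; auto).
  replace (l * fp k l mu r / (2 * sqrt (ff k l K mu r))) with (a / sqrt (ff k l K mu r))
    by (unfold a; field; lra).
  apply Rmult_le_reg_r with (sqrt (ff k l K mu r)); auto.
  unfold Rdiv. rewrite Rmult_assoc, Rinv_l by lra. lra.
Qed.

Lemma H_lt k l K mu r b : 0 < r -> 0 < l -> 0 < ff k l K mu r -> 0 < fp k l mu r -> 0 < b ->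
  Df k l K mu r < (b ^ 2 - 1) * ff k l K mu r -> Hf k l K mu r < b.
Proof.
  intros Hr Hl Hf0 Hp Hb HD. unfold Hf.
  pose proof (Df_id k l K mu r Hr Hl) as Hid.
  set (a := l * fp k l mu r / 2) in *.
  assert (Ha : 0 < a) by (unfold a; apply Rdiv_lt_0_compat; [apply Rmult_lt_0_compat|]; lra).
  assert (Hs0 : 0 < sqrt (ff k l K mu r)) by (apply sqrt_lt_R0; auto).
  assert (Hs : a < b * sqrt (ff k l K mu r)).
  { rewrite <- (sqrt_pow2 a) by lra. rewrite <- (sqrt_pow2 b) by lra.
    rewrite <- sqrt_mult_alt by nra. apply sqrt_lt_1_alt. split. nra. nra. }
  replace (l * fp k l mu r / (2 * sqrt (ff k l K mu r))) with (a / sqrt (ff k l K mu r))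
    by (unfold a; field; lra).
  apply Rmult_lt_reg_r with (sqrt (ff k l K mu r)); auto.
  unfold Rdiv. rewrite Rmult_assoc, Rinv_l by lra. lra.
Qed.
Lemma phi_deriv (k : nat) (P' Q s : R) :
  derivable_pt_lim (fun s => P' * s ^ (S k) - Q * (s * s ^ (S k)) ^ 2) s
    (s ^ k * ((INR k + 1) * P' - 2 * (INR k + 2) * Q * (s ^ 3 * s ^ k))).
Proof.
  apply is_derive_Reals. auto_derive. auto.
  replace (match k with | 0%nat => 1 | S _ => INR k + 1 end) with (INR k + 1)
      by (destruct k; simpl; try ring; rewrite S_INR; ring).
  simpl. ring.
Qed.

Lemma Df_r0_nonneg k l mu r0 : 0 < l -> 0 < r0 -> mu < 0 -> ff k l (-1) mu r0 = 0 ->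
  0 <= Df k l (-1) mu r0.
Proof.
  intros Hl Hr Hmu Hf. unfold ff, Df in *.
  assert (HP : 0 < r0 ^ k) by (apply pow_lt; auto).
  replace (r0 ^ S k) with (r0 * r0 ^ k) in Hf by (simpl; ring).
  set (X0 := r0 * r0 ^ k) in *. assert (HX : 0 < X0) by (unfold X0; nra).
  set (p := - mu / X0).
  assert (Hp : 0 < p) by (unfold p; apply Rdiv_lt_0_compat; lra).
  assert (E : r0 ^ 2 = l ^ 2 * (1 - 2 * p)).
  { assert (Hf' : (r0 ^ 2 / l ^ 2 + -1 - 2 * mu / X0) * l ^ 2 = 0) by (rewrite Hf; ring).
    unfold p. replace ((r0 ^ 2 / l ^ 2 + -1 - 2 * mu / X0) * l ^ 2) with
      (r0 ^ 2 - l ^ 2 * (1 - 2 * (- mu / X0))) in Hf' by (field; lra). lra. }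
  set (N := INR k + 2).
  assert (Hr2 : 0 < r0 ^ 2) by nra.
  assert (Hid : (2 * N * mu / X0 + (N - 1) ^ 2 * mu ^ 2 * l ^ 2 / (r0 ^ 2 * X0 ^ 2) - -1) * r0 ^ 2
     = r0 ^ 2 - 2 * N * p * r0 ^ 2 + (N - 1) ^ 2 * p ^ 2 * l ^ 2).
  { unfold p. field. lra. }
  replace (INR k + 1) with (N - 1) by (unfold N; ring).
  apply Rmult_le_reg_r with (r0 ^ 2); auto. rewrite Rmult_0_l. fold N. rewrite Hid.
  rewrite E. replace (l ^ 2 * (1 - 2 * p) - 2 * N * p * (l ^ 2 * (1 - 2 * p)) + (N - 1) ^ 2 * p ^ 2 * l ^ 2)
    with (l ^ 2 * (1 - (N + 1) * p) ^ 2) by ring.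
  apply Rmult_le_pos; [nra| apply pow2_ge_0].
Qed.

Lemma pow_le1 (x : R) (j : nat) : 0 <= x <= 1 -> x ^ j <= 1.
Proof. intros H. induction j; simpl. lra. assert (0 <= x ^ j) by (apply pow_le; lra). nra. Qed.

Lemma Df_phi k l mu r0 r : 0 < l -> 0 < r0 -> 0 < r ->
  let X0 := r0 * r0 ^ k in let N := INR k + 2 in
  let P' := 2 * N * (- mu) / X0 in
  let Q := (N - 1) ^ 2 * mu ^ 2 * l ^ 2 / (r0 ^ 2 * X0 ^ 2) in
  let s := r0 / r in
  Df k l (-1) mu r = 1 - (P' * s ^ (S k) - Q * (s * s ^ (S k)) ^ 2).
Proof.
  intros Hl Hr0 Hr X0 N P' Q s.
  assert (HP : 0 < r ^ k) by (apply pow_lt; auto).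
  assert (HP0 : 0 < r0 ^ k) by (apply pow_lt; auto).
  assert (Hs : s ^ S k = r0 ^ S k / r ^ S k).
  { unfold s. unfold Rdiv. rewrite Rpow_mult_distr. rewrite pow_inv. reflexivity. }
  rewrite Hs. unfold Df, P', Q, X0, N, s. simpl (r0 ^ S k). simpl (r ^ S k).
  field. repeat split; lra.
Qed.

Lemma Df_mono k l mu r0 r : 0 < l -> 0 < r0 -> r0 <= r -> mu < 0 ->
  0 <= fp k l mu r0 -> Df k l (-1) mu r0 <= Df k l (-1) mu r.
Proof.
  intros Hl Hr0 Hr Hmu Hfp.
  destruct (Req_dec r r0) as [->|Hne]; [lra|].
  assert (Hlt : r0 < r) by lra.
  rewrite (Df_phi k l mu r0 r0), (Df_phi k l mu r0 r) by lra.
  set (X0 := r0 * r0 ^ k). set (N := INR k + 2).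
  set (P' := 2 * N * (- mu) / X0).
  set (Q := (N - 1) ^ 2 * mu ^ 2 * l ^ 2 / (r0 ^ 2 * X0 ^ 2)).
  replace (r0 / r0) with 1 by (field; lra).
  set (s := r0 / r).
  assert (Hs0 : 0 < s) by (unfold s; apply Rdiv_lt_0_compat; lra).
  assert (Hs1 : s < 1) by (unfold s; apply Rmult_lt_reg_r with r; [lra|]; unfold Rdiv; rewrite Rmult_assoc, Rinv_l; lra).
  assert (HP0 : 0 < r0 ^ k) by (apply pow_lt; auto).
  assert (HX0 : 0 < X0) by (unfold X0; nra).
  assert (HN : 2 <= N) by (unfold N; pose proof (pos_INR k); lra).
  assert (HQ : 0 <= Q) by (unfold Q, Rdiv; apply Rmult_le_pos; [apply Rmult_le_pos; [apply Rmult_le_pos; apply pow2_ge_0 | apply pow2_ge_0]| left; apply Rinv_0_lt_compat; apply Rmult_lt_0_compat; apply pow_lt; lra]).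
  assert (Hkey : 2 * N * Q <= (N - 1) * P').
  {
    unfold fp in Hfp. replace (INR k + 1) with (N - 1) in Hfp by (unfold N; ring).
    assert (H1 : (N - 1) * (- mu) * l ^ 2 <= r0 ^ 2 * X0).
    { assert (Hq : 0 <= (2 * r0 / l ^ 2 + 2 * (N - 1) * mu / (r0 * r0 * r0 ^ k)) * (l ^ 2 * r0 * X0 / 2))
        by (apply Rmult_le_pos; [lra| unfold Rdiv; apply Rmult_le_pos; [left; apply Rmult_lt_0_compat; [apply Rmult_lt_0_compat; [apply pow_lt|]|]; lra|lra]]).
      replace ((2 * r0 / l ^ 2 + 2 * (N - 1) * mu / (r0 * r0 * r0 ^ k)) * (l ^ 2 * r0 * X0 / 2))
        with (r0 ^ 2 * X0 + (N - 1) * mu * l ^ 2) in Hq by (unfold X0; field; repeat split; lra).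
      lra. }
    unfold Q, P'.
    replace (2 * N * ((N - 1) ^ 2 * mu ^ 2 * l ^ 2 / (r0 ^ 2 * X0 ^ 2))) with
      ((2 * N * (N - 1) * (- mu) / (r0 ^ 2 * X0 ^ 2)) * ((N - 1) * (- mu) * l ^ 2)) by (field; split; lra).
    replace ((N - 1) * (2 * N * - mu / X0)) with ((2 * N * (N - 1) * (- mu) / (r0 ^ 2 * X0 ^ 2)) * (r0 ^ 2 * X0))
      by (field; split; lra).
    apply Rmult_le_compat_l; auto.
    unfold Rdiv; apply Rmult_le_pos. left; repeat apply Rmult_lt_0_compat; lra. left; apply Rinv_0_lt_compat; apply Rmult_lt_0_compat; apply pow_lt; lra. }
  destruct (MVT_cor2 (fun s => P' * s ^ (S k) - Q * (s * s ^ (S k)) ^ 2)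
     (fun s => s ^ k * ((INR k + 1) * P' - 2 * (INR k + 2) * Q * (s ^ 3 * s ^ k))) s 1 Hs1)
     as [c [Hc1 Hc2]].
  { intros c _. apply phi_deriv. }
  replace (INR k + 1) with (N - 1) in Hc1 by (unfold N; ring). fold N in Hc1.
  assert (Hck : 0 < c ^ k) by (apply pow_lt; lra).
  assert (Hc3 : c ^ 3 * c ^ k <= 1).
  { assert (c ^ 3 <= 1) by (apply pow_le1; lra).
    assert (c ^ k <= 1) by (apply pow_le1; lra).
    assert (0 <= c ^ 3) by (apply pow_le; lra). nra. }
  assert (0 <= c ^ k * ((N - 1) * P' - 2 * N * Q * (c ^ 3 * c ^ k))).
  { apply Rmult_le_pos; [lra|].
    assert (0 <= 2 * N * Q) by (apply Rmult_le_pos; lra).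
    assert (2 * N * Q * (c ^ 3 * c ^ k) <= 2 * N * Q * 1) by (apply Rmult_le_compat_l; lra). lra. }
  assert (0 <= c ^ k * ((N - 1) * P' - 2 * N * Q * (c ^ 3 * c ^ k)) * (1 - s)) by (apply Rmult_le_pos; lra).
  simpl in Hc1. rewrite !pow1 in *. simpl. lra.
Qed.

Lemma fp_r0_pos k l K mu r0 : 0 < l -> (K = -1 \/ K = 0 \/ K = 1) -> ((K = 0 \/ K = 1) -> 0 < mu) ->
  (K = -1 -> mu_min (S (S k)) l < mu) -> 0 < r0 -> ff k l K mu r0 = 0 ->
  (forall r, r0 < r -> ff k l K mu r <> 0) -> 0 < fp k l mu r0.
Proof.
  intros Hl HK Hmu1 Hmu2 Hr0 Hf0 Hnz.
  assert (HK' : -1 <= K) by (destruct HK as [->|[->| ->]]; lra).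
  pose proof (ff_pos k l K mu r0 Hl HK' Hr0 Hnz) as Hpos.
  pose proof (deriv_nonneg_right _ r0 _ Hf0 Hpos (ff_deriv k l K mu r0 Hr0 Hl)) as H0.
  destruct (Req_dec (fp k l mu r0) 0) as [Heq|Hne]; [|lra].
  exfalso. pose proof (crit_mu k l K mu r0 Hl Hr0 HK Hf0 Heq) as Hm.
  destruct HK as [HK|HK].
  - specialize (Hmu2 HK). lra.
  - specialize (Hmu1 HK). unfold fp in Heq.
    assert (HP : 0 < r0 ^ k) by (apply pow_lt; auto).
    assert (0 < 2 * r0 / l ^ 2) by (apply Rdiv_lt_0_compat; [lra| apply pow_lt; lra]).
    assert (0 < 2 * (INR k + 1) * mu / (r0 * r0 * r0 ^ k)).
    { apply Rdiv_lt_0_compat. pose proof (pos_INR k). apply Rmult_lt_0_compat; lra.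
      apply Rmult_lt_0_compat; [apply Rmult_lt_0_compat|]; lra. }
    lra.
Qed.

Lemma fp_pos_all k l mu r0 : 0 < l -> 0 < r0 -> 0 < fp k l mu r0 -> forall r, r0 <= r -> 0 < fp k l mu r.
Proof.
  intros Hl Hr0 Hp r Hr. unfold fp in *.
  assert (HP0 : 0 < r0 ^ k) by (apply pow_lt; auto).
  assert (HP : r0 ^ k <= r ^ k) by (apply pow_incr; lra).
  assert (HA : 0 < r0 * r0 * r0 ^ k) by (apply Rmult_lt_0_compat; [apply Rmult_lt_0_compat|]; lra).
  assert (HAB : r0 * r0 * r0 ^ k <= r * r * r ^ k).
  { apply Rmult_le_compat; try lra. apply Rmult_le_pos; lra. apply Rmult_le_compat; lra. }
  assert (Hl2 : 0 < l ^ 2) by (apply pow_lt; lra).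
  assert (H1 : 2 * r0 / l ^ 2 <= 2 * r / l ^ 2).
  { unfold Rdiv. apply Rmult_le_compat_r. left; apply Rinv_0_lt_compat; lra. lra. }
  pose proof (pos_INR k).
  destruct (Rle_or_lt 0 mu) as [Hm|Hm].
  - assert (0 <= 2 * (INR k + 1) * mu / (r * r * r ^ k)).
    { unfold Rdiv. apply Rmult_le_pos. apply Rmult_le_pos; lra. left; apply Rinv_0_lt_compat; lra. }
    assert (0 < 2 * r / l ^ 2) by (apply Rdiv_lt_0_compat; lra). lra.
  - assert (2 * (INR k + 1) * mu / (r0 * r0 * r0 ^ k) <= 2 * (INR k + 1) * mu / (r * r * r ^ k)).
    { assert (Hi : / (r * r * r ^ k) <= / (r0 * r0 * r0 ^ k)) by (apply Rinv_le_contravar; lra).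
      assert (Hc : 2 * (INR k + 1) * mu < 0) by nra.
      unfold Rdiv. nra. }
    lra.
Qed.

Lemma sqrt_ff_deriv k l K mu r : 0 < r -> 0 < l -> 0 < ff k l K mu r ->
  derivable_pt_lim (fun s => sqrt (ff k l K mu s)) r (fp k l mu r / (2 * sqrt (ff k l K mu r))).
Proof.
  intros Hr Hl Hf.
  replace (fp k l mu r / (2 * sqrt (ff k l K mu r))) with (/ (2 * sqrt (ff k l K mu r)) * fp k l mu r) by (unfold Rdiv; ring).
  apply (derivable_pt_lim_comp (ff k l K mu) sqrt). apply ff_deriv; auto.
  apply derivable_pt_lim_sqrt; auto.
Qed.

Lemma not_deriv_r0 k l K mu r0 d : 0 < l -> 0 < r0 -> 0 < fp k l mu r0 -> ff k l K mu r0 = 0 ->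
  (forall r, r0 < r -> 0 < ff k l K mu r) ->
  ~ derivable_pt_lim (fun s => sqrt (ff k l K mu s)) r0 d.
Proof.
  intros Hl Hr0 Hp Hf0 Hpos Hd.
  pose proof (ff_deriv k l K mu r0 Hr0 Hl) as Hf.
  destruct (Hd 1 ltac:(lra)) as [d1 Hd1].
  destruct (Hf (fp k l mu r0 / 2) ltac:(lra)) as [d2 Hd2].
  set (M := (Rabs d + 1) ^ 2).
  assert (HM : 0 < M) by (unfold M; pose proof (Rabs_pos d); apply pow_lt; lra).
  set (h := Rmin (Rmin d1 d2) (fp k l mu r0 / (2 * M)) / 2).
  assert (Hd1p := cond_pos d1). assert (Hd2p := cond_pos d2).
  assert (Hq : 0 < fp k l mu r0 / (2 * M)) by (apply Rdiv_lt_0_compat; lra).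
  assert (Hh : 0 < h).
  { unfold h. apply Rdiv_lt_0_compat; [|lra]. apply Rmin_pos; [apply Rmin_pos|]; lra. }
  assert (Hh1 : h < d1).
  { unfold h. pose proof (Rmin_l (Rmin d1 d2) (fp k l mu r0 / (2 * M))). pose proof (Rmin_l d1 d2). lra. }
  assert (Hh2 : h < d2).
  { unfold h. pose proof (Rmin_l (Rmin d1 d2) (fp k l mu r0 / (2 * M))). pose proof (Rmin_r d1 d2). lra. }
  assert (Hh3 : h < fp k l mu r0 / (2 * M)).
  { unfold h. pose proof (Rmin_r (Rmin d1 d2) (fp k l mu r0 / (2 * M))). lra. }
  assert (Hhn : h <> 0) by lra.
  assert (Habs : Rabs h = h) by (apply Rabs_right; lra).
  specialize (Hd1 h Hhn ltac:(lra)). specialize (Hd2 h Hhn ltac:(lra)).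
  rewrite Hf0 in Hd1, Hd2. rewrite sqrt_0 in Hd1.
  assert (Hfh : 0 < ff k l K mu (r0 + h)) by (apply Hpos; lra).
  assert (Hs : sqrt (ff k l K mu (r0 + h)) < (Rabs d + 1) * h).
  { apply Rabs_def2 in Hd1. destruct Hd1 as [Ha Hb].
    pose proof (Rle_abs d).
    assert ((sqrt (ff k l K mu (r0 + h)) - 0) / h < Rabs d + 1) by lra.
    apply Rmult_lt_reg_r with (/ h). apply Rinv_0_lt_compat; lra.
    replace ((Rabs d + 1) * h * / h) with (Rabs d + 1) by (field; lra). unfold Rdiv in H0. lra. }
  assert (Hs2 : ff k l K mu (r0 + h) < M * h ^ 2).
  { pose proof (sqrt_pos (ff k l K mu (r0 + h))).
    rewrite <- (sqrt_sqrt (ff k l K mu (r0 + h))) by lra. unfold M.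
    replace ((Rabs d + 1) ^ 2 * h ^ 2) with (((Rabs d + 1) * h) * ((Rabs d + 1) * h)) by ring.
    apply Rmult_le_0_lt_compat; lra. }
  assert (Hq2 : fp k l mu r0 / 2 * h < ff k l K mu (r0 + h)).
  { apply Rabs_def2 in Hd2. destruct Hd2 as [Ha Hb].
    assert (fp k l mu r0 / 2 < (ff k l K mu (r0 + h) - 0) / h) by lra.
    apply Rmult_lt_reg_r with (/ h). apply Rinv_0_lt_compat; lra.
    replace (fp k l mu r0 / 2 * h * / h) with (fp k l mu r0 / 2) by (field; lra). unfold Rdiv in H. lra. }
  assert (Hc : fp k l mu r0 / 2 * h < M * h ^ 2) by lra.
  assert (fp k l mu r0 / 2 < M * h).
  { apply Rmult_lt_reg_r with h; auto. replace (M * h * h) with (M * h ^ 2) by ring. lra. }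
  assert (M * h < M * (fp k l mu r0 / (2 * M))) by (apply Rmult_lt_compat_l; lra).
  replace (M * (fp k l mu r0 / (2 * M))) with (fp k l mu r0 / 2) in H0 by (field; lra).
  lra.
Qed.

Lemma lam_set_char k l K mu r0 : 0 < l -> 0 < r0 -> 0 < fp k l mu r0 -> ff k l K mu r0 = 0 ->
  (forall r, r0 < r -> 0 < ff k l K mu r) ->
  forall y, lam_set (S (S k)) l K mu r0 y <-> exists r, r0 < r /\ y = Hf k l K mu r.
Proof.
  intros Hl Hr0 Hp Hf0 Hpos y. split.
  - intros [r [d [Hr [Hd Hy]]]].
    change (derivable_pt_lim (fun s => sqrt (ff k l K mu s)) r d) in Hd.
    destruct (Req_dec r r0) as [Heq|Hne].
    + exfalso. rewrite Heq in Hd. exact (not_deriv_r0 k l K mu r0 d Hl Hr0 Hp Hf0 Hpos Hd).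
    + exists r. split; [lra|]. subst y.
      pose proof (sqrt_ff_deriv k l K mu r ltac:(lra) Hl (Hpos r ltac:(lra))) as Hd'.
      rewrite (uniqueness_limite _ _ _ _ Hd Hd'). unfold Hf. unfold Rdiv. ring.
  - intros [r [Hr ->]]. exists r, (fp k l mu r / (2 * sqrt (ff k l K mu r))). split; [lra|]. split.
    + change (derivable_pt_lim (fun s => sqrt (ff k l K mu s)) r (fp k l mu r / (2 * sqrt (ff k l K mu r)))).
      apply sqrt_ff_deriv; auto; lra.
    + unfold Hf. unfold Rdiv. ring.
Qed.

Lemma div_le_aux a b c d : 0 <= c <= a -> 0 < b <= d -> c / d <= a / b.
Proof.
  intros [H1 H2] [H3 H4]. unfold Rdiv.
  apply Rmult_le_compat; try lra. left; apply Rinv_0_lt_compat; lra.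
  apply Rinv_le_contravar; lra.
Qed.

Lemma Hf_lower_K1 k l mu r0 r : 0 < l -> 0 < r0 -> 0 < mu -> r0 <= r -> 0 < ff k l 1 mu r ->
  r0 / (r0 + l) <= Hf k l 1 mu r.
Proof.
  intros Hl Hr0 Hmu Hr Hf0. unfold Hf.
  assert (HP : 0 < r ^ k) by (apply pow_lt; lra).
  assert (Hfp : r / l <= l * fp k l mu r / 2).
  { unfold fp. pose proof (pos_INR k).
    assert (0 <= 2 * (INR k + 1) * mu / (r * r * r ^ k)).
    { unfold Rdiv. apply Rmult_le_pos. apply Rmult_le_pos; lra. left; apply Rinv_0_lt_compat.
      apply Rmult_lt_0_compat; [apply Rmult_lt_0_compat|]; lra. }
    replace (l * (2 * r / l ^ 2 + 2 * (INR k + 1) * mu / (r * r * r ^ k)) / 2) with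
      (r / l + l * (2 * (INR k + 1) * mu / (r * r * r ^ k)) / 2) by (field; lra).
    assert (0 <= l * (2 * (INR k + 1) * mu / (r * r * r ^ k)) / 2) by (apply Rmult_le_pos; [apply Rmult_le_pos|]; lra).
    lra. }
  assert (Hsq : sqrt (ff k l 1 mu r) <= (r + l) / l).
  { rewrite <- (sqrt_pow2 ((r + l) / l)) by (apply Rlt_le, Rdiv_lt_0_compat; lra).
    apply sqrt_le_1_alt. unfold ff.
    assert (0 <= 2 * mu / r ^ S k) by (apply Rlt_le, Rdiv_lt_0_compat; [lra| apply pow_lt; lra]).
    replace (((r + l) / l) ^ 2) with (r ^ 2 / l ^ 2 + 1 + 2 * r / l) by (field; lra).
    assert (0 <= 2 * r / l) by (apply Rlt_le, Rdiv_lt_0_compat; lra). lra. }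
  assert (Hs0 : 0 < sqrt (ff k l 1 mu r)) by (apply sqrt_lt_R0; auto).
  replace (l * fp k l mu r / (2 * sqrt (ff k l 1 mu r))) with ((l * fp k l mu r / 2) / sqrt (ff k l 1 mu r))
    by (field; lra).
  apply Rle_trans with ((r / l) / ((r + l) / l)).
  - replace (r / l / ((r + l) / l)) with (r / (r + l)) by (field; lra).
    apply Rmult_le_reg_r with ((r0 + l) * (r + l)). nra.
    replace (r0 / (r0 + l) * ((r0 + l) * (r + l))) with (r0 * (r + l)) by (field; lra).
    replace (r / (r + l) * ((r0 + l) * (r + l))) with (r * (r0 + l)) by (field; lra). nra.
  - apply div_le_aux. split; [apply Rlt_le, Rdiv_lt_0_compat; lra| lra]. lra.
Qed.

Lemma abs_div_le (a Y : R) : 1 <= Y -> Rabs (a / Y) <= Rabs a.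
Proof.
  intros HY. unfold Rdiv. rewrite Rabs_mult, Rabs_inv. rewrite (Rabs_right Y) by lra.
  assert (/ Y <= 1) by (rewrite <- Rinv_1; apply Rinv_le_contravar; lra).
  assert (0 < / Y) by (apply Rinv_0_lt_compat; lra).
  pose proof (Rabs_pos a). nra.
Qed.

Lemma nonneg_div_le (a Y : R) : 0 <= a -> 1 <= Y -> a / Y <= a.
Proof. intros. unfold Rdiv. assert (/ Y <= 1) by (rewrite <- Rinv_1; apply Rinv_le_contravar; lra).
  nra. Qed.

Lemma H_near1 k l K mu r0 b : 0 < l -> 0 < r0 -> -1 <= K -> 1 < b ->
  (forall r, r0 < r -> 0 < ff k l K mu r) -> (forall r, r0 < r -> 0 < fp k l mu r) ->
  exists r, r0 < r /\ Hf k l K mu r < b.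
Proof.
  intros Hl Hr0 HK Hb Hpos Hfp.
  set (N := INR k + 2).
  assert (HN : 2 <= N) by (unfold N; pose proof (pos_INR k); lra).
  set (C := b ^ 2 + (2 * b ^ 2 - 2 + 2 * N) * Rabs mu + (N - 1) ^ 2 * mu ^ 2 * l ^ 2 + 1).
  assert (Hb2 : 0 < b ^ 2 - 1) by nra.
  assert (HC : 0 < C).
  { unfold C. pose proof (Rabs_pos mu). assert (0 <= (N - 1) ^ 2 * mu ^ 2 * l ^ 2) by
      (apply Rmult_le_pos; [apply Rmult_le_pos|]; apply pow2_ge_0). nra. }
  assert (Hl2 : 0 < l ^ 2) by (apply pow_lt; lra).
  set (r := r0 + 1 + C * l ^ 2 / (b ^ 2 - 1)).
  assert (HCl : 0 < C * l ^ 2 / (b ^ 2 - 1)) by (apply Rdiv_lt_0_compat; [apply Rmult_lt_0_compat|]; lra).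
  assert (Hr1 : 1 <= r) by (unfold r; lra).
  exists r. split; [unfold r; lra|].
  apply H_lt; try lra. apply Hpos; unfold r; lra. apply Hfp; unfold r; lra.
  assert (HX : 1 <= r * r ^ k) by (change (1 <= r ^ S k); apply pow_R1_Rle; lra).
  assert (HrX : 1 <= r ^ 2 * (r * r ^ k) ^ 2).
  { assert (1 <= r ^ 2) by (apply pow_R1_Rle; lra). assert (1 <= (r * r ^ k) ^ 2) by (apply pow_R1_Rle; lra). nra. }
  assert (Hid : (b ^ 2 - 1) * ff k l K mu r - Df k l K mu r =
     (b ^ 2 - 1) * (r ^ 2 / l ^ 2) + b ^ 2 * K - (2 * b ^ 2 - 2 + 2 * N) * (mu / (r * r ^ k))
     - (N - 1) ^ 2 * mu ^ 2 * l ^ 2 / (r ^ 2 * (r * r ^ k) ^ 2)).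
  { unfold ff, Df, N. simpl (r ^ S k). field. assert (0 < r ^ k) by (apply pow_lt; lra). repeat split; nra. }
  assert (A1 : (2 * b ^ 2 - 2 + 2 * N) * (mu / (r * r ^ k)) <= (2 * b ^ 2 - 2 + 2 * N) * Rabs mu).
  { apply Rmult_le_compat_l; [nra|]. pose proof (abs_div_le mu (r * r ^ k) HX). pose proof (Rle_abs (mu / (r * r ^ k))). lra. }
  assert (A2 : (N - 1) ^ 2 * mu ^ 2 * l ^ 2 / (r ^ 2 * (r * r ^ k) ^ 2) <= (N - 1) ^ 2 * mu ^ 2 * l ^ 2).
  { apply nonneg_div_le; auto. apply Rmult_le_pos; [apply Rmult_le_pos|]; apply pow2_ge_0. }
  assert (A3 : C <= (b ^ 2 - 1) * (r ^ 2 / l ^ 2)).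
  { assert (r <= r ^ 2) by (simpl; nra).
    assert (C * l ^ 2 / (b ^ 2 - 1) <= r) by (unfold r; lra).
    assert (C <= (b ^ 2 - 1) * (r / l ^ 2)).
    { apply Rmult_le_reg_r with (l ^ 2 / (b ^ 2 - 1)). apply Rdiv_lt_0_compat; lra.
      replace ((b ^ 2 - 1) * (r / l ^ 2) * (l ^ 2 / (b ^ 2 - 1))) with r by (field; lra).
      unfold Rdiv in *. lra. }
    assert (r / l ^ 2 <= r ^ 2 / l ^ 2) by (unfold Rdiv; apply Rmult_le_compat_r; [left; apply Rinv_0_lt_compat|]; lra).
    nra. }
  assert (A4 : b ^ 2 * K >= - b ^ 2) by nra.
  unfold C in A3. lra.
Qed.

Lemma H_below1_K1 k l mu r0 : 0 < l -> 0 < r0 -> 0 < mu ->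
  (forall r, r0 < r -> 0 < ff k l 1 mu r) -> (forall r, r0 < r -> 0 < fp k l mu r) ->
  exists r, r0 < r /\ Hf k l 1 mu r < 1.
Proof.
  intros Hl Hr0 Hmu Hpos Hfp.
  set (N := INR k + 2).
  assert (HN : 2 <= N) by (unfold N; pose proof (pos_INR k); lra).
  set (C := 2 * N * mu + (N - 1) ^ 2 * mu ^ 2 * l ^ 2).
  assert (HC : 0 < C).
  { unfold C. assert (0 <= (N - 1) ^ 2 * mu ^ 2 * l ^ 2) by
      (apply Rmult_le_pos; [apply Rmult_le_pos|]; apply pow2_ge_0). nra. }
  set (r := r0 + 1 + C).
  assert (Hr1 : 1 <= r) by (unfold r; lra).
  exists r. split; [unfold r; lra|].
  apply H_lt; try lra. apply Hpos; unfold r; lra. apply Hfp; unfold r; lra.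
  replace ((1 ^ 2 - 1) * ff k l 1 mu r) with 0 by ring.
  assert (Hk : 1 <= r ^ k) by (apply pow_R1_Rle; lra).
  assert (HX : r <= r * r ^ k) by nra.
  assert (HrX : r <= r ^ 2 * (r * r ^ k) ^ 2).
  { assert (1 <= r ^ 2) by (apply pow_R1_Rle; lra). assert (1 <= r * r ^ k) by nra.
    assert (r <= (r * r ^ k) ^ 2) by (simpl; nra). nra. }
  unfold Df. fold N. replace (INR k + 1) with (N - 1) by (unfold N; ring).
  assert (B1 : 2 * N * mu / (r * r ^ k) <= 2 * N * mu / r).
  { unfold Rdiv. apply Rmult_le_compat_l; [nra|]. apply Rinv_le_contravar; lra. }
  assert (B2 : (N - 1) ^ 2 * mu ^ 2 * l ^ 2 / (r ^ 2 * (r * r ^ k) ^ 2) <= (N - 1) ^ 2 * mu ^ 2 * l ^ 2 / r).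
  { unfold Rdiv. apply Rmult_le_compat_l. apply Rmult_le_pos; [apply Rmult_le_pos|]; apply pow2_ge_0.
    apply Rinv_le_contravar; lra. }
  assert (B3 : 2 * N * mu / r + (N - 1) ^ 2 * mu ^ 2 * l ^ 2 / r < 1).
  { replace (2 * N * mu / r + (N - 1) ^ 2 * mu ^ 2 * l ^ 2 / r) with (C / r) by (unfold C; field; lra).
    apply Rmult_lt_reg_r with r; [lra|]. unfold Rdiv. rewrite Rmult_assoc, Rinv_l by lra. unfold r; lra. }
  lra.
Qed.

Lemma Df_nonneg_pos k l K mu r : 0 <= mu -> K <= 0 -> 0 < r -> 0 <= Df k l K mu r.
Proof.
  intros Hm HK Hr. unfold Df. assert (0 < r ^ k) by (apply pow_lt; auto).
  assert (0 <= 2 * (INR k + 2) * mu / (r * r ^ k)).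
  { unfold Rdiv. apply Rmult_le_pos. pose proof (pos_INR k). apply Rmult_le_pos; lra.
    left; apply Rinv_0_lt_compat; nra. }
  assert (0 <= (INR k + 1) ^ 2 * mu ^ 2 * l ^ 2 / (r ^ 2 * (r * r ^ k) ^ 2)).
  { unfold Rdiv. apply Rmult_le_pos. apply Rmult_le_pos; [apply Rmult_le_pos|]; apply pow2_ge_0.
    left; apply Rinv_0_lt_compat. apply Rmult_lt_0_compat; apply pow_lt; nra. }
  lra.
Qed.

Lemma lam_exists k l K mu r0 : 0 < l -> (K = -1 \/ K = 0 \/ K = 1) -> ((K = 0 \/ K = 1) -> 0 < mu) ->
  (K = -1 -> mu_min (S (S k)) l < mu) -> 0 < r0 -> ff k l K mu r0 = 0 ->
  (forall r, r0 < r -> ff k l K mu r <> 0) ->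
  exists lam, is_glb (lam_set (S (S k)) l K mu r0) lam /\ ((K = -1 \/ K = 0) -> lam = 1) /\
    (K = 1 -> 0 < lam < 1) /\ 0 < lam /\ (forall r, r0 < r -> lam <= Hf k l K mu r).
Proof.
  intros Hl HK Hmu1 Hmu2 Hr0 Hf0 Hnz.
  assert (HK' : -1 <= K) by (destruct HK as [->|[->| ->]]; lra).
  pose proof (ff_pos k l K mu r0 Hl HK' Hr0 Hnz) as Hpos.
  pose proof (fp_r0_pos k l K mu r0 Hl HK Hmu1 Hmu2 Hr0 Hf0 Hnz) as Hfp0.
  assert (Hfp : forall r, r0 < r -> 0 < fp k l mu r) by (intros; apply (fp_pos_all k l mu r0); auto; lra).
  pose proof (lam_set_char k l K mu r0 Hl Hr0 Hfp0 Hf0 Hpos) as Hch.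
  destruct HK as [HK|[HK|HK]].
  -
    assert (Hge : forall r, r0 < r -> 1 <= Hf k l K mu r).
    { intros r Hr. apply H_ge1; auto; try lra.
      destruct (Rle_or_lt 0 mu) as [Hm|Hm].
      - apply Df_nonneg_pos; lra.
      - subst K. apply Rle_trans with (Df k l (-1) mu r0).
        apply Df_r0_nonneg; auto. apply Df_mono; auto; lra. }
    exists 1. split; [split|].
    + intros x Hx. apply Hch in Hx. destruct Hx as [r [Hr ->]]. auto.
    + intros b Hb. destruct (Rle_or_lt b 1) as [?|Hb1]; auto. exfalso.
      destruct (H_near1 k l K mu r0 b Hl Hr0 HK' Hb1 Hpos Hfp) as [r [Hr Hlt]].
      assert (b <= Hf k l K mu r) by (apply Hb; apply Hch; eauto). lra.
    + split; [intros; reflexivity|]. split; [intros; lra|]. split; [lra|]. exact Hge.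
  - assert (Hge : forall r, r0 < r -> 1 <= Hf k l K mu r).
    { intros r Hr. apply H_ge1; auto; try lra.
      assert (0 < mu) by (apply Hmu1; auto). apply Df_nonneg_pos; lra. }
    exists 1. split; [split|].
    + intros x Hx. apply Hch in Hx. destruct Hx as [r [Hr ->]]. auto.
    + intros b Hb. destruct (Rle_or_lt b 1) as [?|Hb1]; auto. exfalso.
      destruct (H_near1 k l K mu r0 b Hl Hr0 HK' Hb1 Hpos Hfp) as [r [Hr Hlt]].
      assert (b <= Hf k l K mu r) by (apply Hb; apply Hch; eauto). lra.
    + split; [intros; reflexivity|]. split; [intros; lra|]. split; [lra|]. exact Hge.
  - subst K. assert (Hm : 0 < mu) by (apply Hmu1; auto).
    set (c0 := r0 / (r0 + l)).
    assert (Hc0 : 0 < c0) by (unfold c0; apply Rdiv_lt_0_compat; lra).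
    assert (Hlow : forall r, r0 < r -> c0 <= Hf k l 1 mu r).
    { intros r Hr. apply Hf_lower_K1; auto; lra. }
    set (E := fun x => lam_set (S (S k)) l 1 mu r0 (- x)).
    assert (HbE : bound E).
    { exists (- c0). intros x Hx. unfold E in Hx. apply Hch in Hx. destruct Hx as [r [Hr Hx]].
      specialize (Hlow r Hr). lra. }
    assert (HnE : exists x, E x).
    { exists (- Hf k l 1 mu (r0 + 1)). unfold E. apply Hch. exists (r0 + 1). split; [lra|]. ring. }
    destruct (completeness E HbE HnE) as [L [HL1 HL2]].
    assert (Hglb1 : forall r, r0 < r -> - L <= Hf k l 1 mu r).
    { intros r Hr. assert (E (- Hf k l 1 mu r)) by (unfold E; apply Hch; exists r; split; [lra|ring]).
      specialize (HL1 _ H). lra. }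
    assert (HLc : - L >= c0).
    { assert (L <= - c0).
      { apply HL2. intros x Hx. unfold E in Hx. apply Hch in Hx. destruct Hx as [r [Hr Hx]].
        specialize (Hlow r Hr). lra. }
      lra. }
    exists (- L). split; [split|].
    + intros x Hx. apply Hch in Hx. destruct Hx as [r [Hr ->]]. auto.
    + intros b Hb. assert (L <= - b).
      { apply HL2. intros x Hx. unfold E in Hx. specialize (Hb _ Hx). lra. }
      lra.
    + destruct (H_below1_K1 k l mu r0 Hl Hr0 Hm Hpos Hfp) as [r [Hr Hlt]].
      pose proof (Hglb1 r Hr).
      split; [intros [H9|H9]; lra|]. split; [intros; lra|]. split; [lra|]. exact Hglb1.
Qed.

Lemma mvt_sym (f f' : R -> R) a b : (forall c, derivable_pt_lim f c (f' c)) ->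
  exists c, Rabs (c - a) <= Rabs (b - a) /\ f b - f a = f' c * (b - a).
Proof.
  intros Hd. destruct (Rtotal_order a b) as [H|[H|H]].
  - destruct (MVT_cor2 f f' a b H (fun c _ => Hd c)) as [c [Hc1 Hc2]].
    exists c. split; auto. rewrite !Rabs_right by lra. lra.
  - subst. exists b. split. rewrite Rminus_diag, Rabs_R0. lra. ring.
  - destruct (MVT_cor2 f f' b a H (fun c _ => Hd c)) as [c [Hc1 Hc2]].
    exists c. split. rewrite !Rabs_left by lra. lra. lra.
Qed.

Lemma diff_partials (U Ux Uy : R -> R -> R) x y :
  (forall x y, derivable_pt_lim (fun z => U z y) x (Ux x y)) ->
  (forall x y, derivable_pt_lim (fun z => U x z) y (Uy x y)) ->
  continuous2 Ux -> continuous2 Uy -> differentiable_pt_lim U x y (Ux x y) (Uy x y).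
Proof.
  intros Hx Hy Cx Cy eps.
  destruct (Cx x y (eps / 2) ltac:(destruct eps; simpl; lra)) as [d1 [Hd1 H1]].
  destruct (Cy x y (eps / 2) ltac:(destruct eps; simpl; lra)) as [d2 [Hd2 H2]].
  assert (Hd : 0 < Rmin d1 d2) by (apply Rmin_pos; auto).
  exists (mkposreal _ Hd). simpl. intros u v Hu Hv.
  pose proof (Rmin_l d1 d2). pose proof (Rmin_r d1 d2).
  destruct (mvt_sym (fun z => U z v) (fun z => Ux z v) x u (fun c => Hx c v)) as [xi [Hxi Exi]].
  destruct (mvt_sym (fun z => U x z) (fun z => Uy x z) y v (fun c => Hy x c)) as [eta [Heta Eeta]].
  simpl in Exi, Eeta.
  assert (A1 : Rabs (Ux xi v - Ux x y) < eps / 2) by (apply H1; lra).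
  assert (A2 : Rabs (Uy x eta - Uy x y) < eps / 2) by (apply H2; [rewrite Rminus_diag, Rabs_R0|]; lra).
  replace (U u v - U x y - (Ux x y * (u - x) + Uy x y * (v - y))) with
    ((Ux xi v - Ux x y) * (u - x) + (Uy x eta - Uy x y) * (v - y)) by lra.
  eapply Rle_trans. apply Rabs_triang. rewrite !Rabs_mult.
  pose proof (Rmax_l (Rabs (u - x)) (Rabs (v - y))). pose proof (Rmax_r (Rabs (u - x)) (Rabs (v - y))).
  pose proof (Rabs_pos (u - x)). pose proof (Rabs_pos (v - y)).
  pose proof (Rabs_pos (Ux xi v - Ux x y)). pose proof (Rabs_pos (Uy x eta - Uy x y)).
  destruct eps as [e He]. simpl in *. nra.
Qed.

Lemma cont2_to_2d (U : R -> R -> R) x y : continuous2 U -> continuity_2d_pt U x y.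
Proof.
  intros C eps. destruct (C x y eps (cond_pos eps)) as [d [Hd H]].
  exists (mkposreal _ Hd). simpl. intros u v Hu Hv. apply H; auto.
Qed.

Lemma cont2_comp (U A B : R -> R -> R) x y : continuous2 U ->
  continuity_2d_pt A x y -> continuity_2d_pt B x y ->
  continuity_2d_pt (fun a b => U (A a b) (B a b)) x y.
Proof.
  intros C CA CB eps. destruct (C (A x y) (B x y) eps (cond_pos eps)) as [d [Hd H]].
  pose proof (locally_2d_and _ _ x y (CA (mkposreal _ Hd)) (CB (mkposreal _ Hd))) as L.
  eapply locally_2d_impl; [|exact L]. apply locally_2d_forall. intros u v [H1 H2].
  apply H; auto.
Qed.

Lemma cont2_slice (f : R -> R -> R) x y : continuity_2d_pt f x y -> continuity_pt (fun t => f x t) y.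
Proof.
  intros C. apply continuity_pt_locally. intro eps.
  apply (locally_2d_1d_const_x (fun u v => Rabs (f u v - f x y) < eps) x y (C eps)).
Qed.

Lemma cont_1d_x (g : R -> R) x y : continuity_pt g x -> continuity_2d_pt (fun a b => g a) x y.
Proof. intros. apply (continuity_1d_2d_pt_comp g (fun a b => a)); auto. apply continuity_2d_pt_id1. Qed.

Lemma cont_1d_y (g : R -> R) x y : continuity_pt g y -> continuity_2d_pt (fun a b => g b) x y.
Proof. intros. apply (continuity_1d_2d_pt_comp g (fun a b => b)); auto. apply continuity_2d_pt_id2. Qed.

Lemma locally_gt r0 x : r0 < x -> locally x (fun y => r0 < y).
Proof. intros H. apply (open_gt r0). auto. Qed.

Lemma locally_2d_gt r0 x t : r0 < x -> locally_2d (fun a b => r0 < a) x t.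
Proof.
  intros H. assert (Hp : 0 < x - r0) by lra. exists (mkposreal _ Hp). simpl.
  intros u v Hu Hv. apply Rabs_def2 in Hu. lra.
Qed.

Lemma cont2_sq (v : R -> R -> R) x t : continuity_2d_pt v x t -> continuity_2d_pt (fun a b => v a b ^ 2) x t.
Proof.
  intros C. apply continuity_2d_pt_ext with (fun a b => v a b * v a b).
  intros; ring. apply continuity_2d_pt_mult; auto.
Qed.

Lemma ex_RInt_slice (k : R -> R -> R) y T : 0 <= T -> (forall b, continuity_2d_pt k y b) ->
  ex_RInt (fun t => k y t) 0 T.
Proof.
  intros HT C. apply (ex_RInt_continuous (V := R_CompleteNormedModule)). intros z _.
  apply continuity_pt_filterlim. apply cont2_slice. auto.
Qed.

Lemma param_deriv (v w : R -> R -> R) r0 T x : 0 <= T -> r0 < x ->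
  (forall a b, r0 < a -> continuity_2d_pt v a b) -> (forall a b, r0 < a -> continuity_2d_pt w a b) ->
  (forall a b, r0 < a -> derivable_pt_lim (fun s => v s b) a (w a b)) ->
  is_derive (fun y => RInt (fun t => v y t ^ 2) 0 T) x (RInt (fun t => 2 * v x t * w x t) 0 T).
Proof.
  intros HT Hx Cv Cw Dv.
  assert (Dsq : forall a b, r0 < a -> is_derive (fun s => v s b ^ 2) a (2 * v a b * w a b)).
  { intros a b Ha. apply is_derive_Reals.
    replace (2 * v a b * w a b) with (INR 2 * (v a b) ^ (pred 2) * w a b) by (simpl; ring).
    apply (derivable_pt_lim_comp (fun s => v s b) (fun z => z ^ 2)). auto.
    apply derivable_pt_lim_pow. }
  assert (E : RInt (fun t => 2 * v x t * w x t) 0 T = RInt (fun t => Derive (fun u => v u t ^ 2) x) 0 T).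
  { apply RInt_ext. intros t _. symmetry. apply is_derive_unique. apply Dsq; auto. }
  rewrite E.
  apply (is_derive_RInt_param (fun a t => v a t ^ 2)).
  - apply (filter_imp (fun y => r0 < y)); [|apply locally_gt; auto].
    intros y Hy t _. eexists. apply Dsq; auto.
  - intros t _. apply continuity_2d_pt_ext_loc with (fun a b => 2 * v a b * w a b).
    + apply locally_2d_impl with (fun a b => r0 < a); [|apply locally_2d_gt; auto].
      apply locally_2d_forall. intros a b Ha. symmetry. apply is_derive_unique. apply Dsq; auto.
    + apply continuity_2d_pt_mult. apply continuity_2d_pt_mult. apply continuity_2d_pt_const.
      apply Cv; auto. apply Cw; auto.
  - apply (filter_imp (fun y => r0 < y)); [|apply locally_gt; auto].
    intros y Hy. apply (ex_RInt_slice (fun a b => v a b ^ 2)); auto.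
    intros b. apply cont2_sq. apply Cv; auto.
Qed.

Lemma param_cont (k : R -> R -> R) r0 T x : 0 <= T -> r0 < x ->
  (forall a b, r0 < a -> continuity_2d_pt k a b) ->
  continuity_pt (fun y => RInt (fun t => k y t) 0 T) x.
Proof.
  intros HT Hx C. apply continuity_pt_locally. intros eps.
  set (d0 := (x - r0) / 2). assert (Hd0 : 0 < d0) by (unfold d0; lra).
  assert (HTe : 0 < eps / (T + 1)) by (apply Rdiv_lt_0_compat; [apply cond_pos|lra]).
  destruct (uniform_continuity_2d k (x - d0) (x + d0) 0 T) with (mkposreal _ HTe) as [d Hd].
  { intros a b Ha Hb. apply C. unfold d0 in *; lra. }
  assert (Hm : 0 < Rmin d d0) by (apply Rmin_pos; [apply cond_pos|auto]).
  exists (mkposreal _ Hm). intros z Hz. change (Rabs (z - x) < Rmin d d0) in Hz.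
  pose proof (Rmin_l d d0). pose proof (Rmin_r d d0).
  assert (Hz0 : r0 < z) by (apply Rabs_def2 in Hz; unfold d0 in *; lra).
  assert (Ez : ex_RInt (fun t => k z t) 0 T) by (apply ex_RInt_slice; auto).
  assert (Ex : ex_RInt (fun t => k x t) 0 T) by (apply ex_RInt_slice; auto).
  assert (E : RInt (fun t => k z t) 0 T - RInt (fun t => k x t) 0 T = RInt (fun t => k z t - k x t) 0 T).
  { symmetry. apply (RInt_minus (V := R_CompleteNormedModule)); auto. }
  rewrite E.
  eapply Rle_lt_trans. apply (abs_RInt_le_const _ 0 T (eps / (T + 1))); auto.
  - apply (ex_RInt_minus (V := R_CompleteNormedModule)); auto.
  - intros t Ht. left. 
    assert (Hzb : x - d0 <= z <= x + d0) by (apply Rabs_def2 in Hz; split; lra).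
    assert (Hzd : Rabs (z - x) < d) by lra.
    assert (Htt : Rabs (t - t) < d) by (rewrite Rminus_diag, Rabs_R0; apply cond_pos).
    apply Hd; auto; split; lra.
  - replace ((T - 0) * (eps / (T + 1))) with (eps * (T / (T + 1))) by (field; lra).
    destruct eps as [e He]. simpl.
    assert (T / (T + 1) < 1) by (apply Rmult_lt_reg_r with (T + 1); [lra|]; unfold Rdiv; rewrite Rmult_assoc, Rinv_l; lra).
    nra.
Qed.

Lemma RInt_eq_is (g : R -> R) a b I : RInt_eq g a b I -> is_RInt g a b I.
Proof.
  intros [pr Hpr]. rewrite <- Hpr, <- RInt_Reals. apply (RInt_correct (V := R_CompleteNormedModule)).
  apply ex_RInt_Reals_1; auto.
Qed.

Lemma core_G (r0 T m : R) (fr hd : R -> R) (v w : R -> R -> R) x :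
  0 < T -> r0 < x ->
  (forall x, r0 < x -> 0 < fr x) ->
  (forall x, r0 < x -> derivable_pt_lim (fun s => sqrt (fr s)) x (hd x)) ->
  (forall x, r0 < x -> continuity_pt hd x) ->
  (forall a b, r0 < a -> continuity_2d_pt v a b) ->
  (forall a b, r0 < a -> continuity_2d_pt w a b) ->
  (forall a b, r0 < a -> derivable_pt_lim (fun s => v s b) a (w a b)) ->
  is_derive (fun y => - (m / 2) * (sqrt (fr y) * RInt (fun t => v y t ^ 2) 0 T)) x
    (- (m / 2) * (hd x * RInt (fun t => v x t ^ 2) 0 T + sqrt (fr x) * RInt (fun t => 2 * v x t * w x t) 0 T))
  /\ continuity_pt (fun y => - (m / 2) * (hd y * RInt (fun t => v y t ^ 2) 0 T
        + sqrt (fr y) * RInt (fun t => 2 * v y t * w y t) 0 T)) x.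
Proof.
  intros HT Hx Hfr Dh Ch Cv Cw Dv.
  pose proof (param_deriv v w r0 T x ltac:(lra) Hx Cv Cw Dv) as DI.
  split.
  - apply is_derive_scal.
    apply (is_derive_mult (K := R_AbsRing) (fun y => sqrt (fr y)) (fun y => RInt (fun t => v y t ^ 2) 0 T)).
    + apply is_derive_Reals. apply Dh; auto.
    + exact DI.
    + intros; apply Rmult_comm.
  - apply (continuity_pt_scal (fun y => hd y * RInt (fun t => v y t ^ 2) 0 T
        + sqrt (fr y) * RInt (fun t => 2 * v y t * w y t) 0 T)).
    apply (continuity_pt_plus (fun y => hd y * RInt (fun t => v y t ^ 2) 0 T)
        (fun y => sqrt (fr y) * RInt (fun t => 2 * v y t * w y t) 0 T)).
    + apply (continuity_pt_mult hd (fun y => RInt (fun t => v y t ^ 2) 0 T)). apply Ch; auto.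
      apply derivable_continuous_pt. exists (RInt (fun t => 2 * v x t * w x t) 0 T).
      apply is_derive_Reals. exact DI.
    + apply (continuity_pt_mult (fun y => sqrt (fr y)) (fun y => RInt (fun t => 2 * v y t * w y t) 0 T)).
      apply derivable_continuous_pt. exists (hd x). apply Dh; auto.
      apply (param_cont (fun a b => 2 * v a b * w a b) r0 T x); try lra.
      intros a b Ha. apply continuity_2d_pt_mult. apply continuity_2d_pt_mult. apply continuity_2d_pt_const.
      apply Cv; auto. apply Cw; auto.
Qed.

Lemma core_P (r0 T m : R) (fr hd : R -> R) (v w ut : R -> R -> R) x F1x F2x :
  0 < T -> 0 < m -> r0 < x -> 0 < fr x -> m <= hd x ->
  (forall a b, r0 < a -> continuity_2d_pt v a b) ->
  (forall a b, r0 < a -> continuity_2d_pt w a b) ->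
  RInt_eq (fun t => grad_sq (fr x) (w x t) (ut x t)) 0 T F1x ->
  RInt_eq (fun t => v x t ^ 2) 0 T F2x ->
  - (m / 2) * (hd x * RInt (fun t => v x t ^ 2) 0 T + sqrt (fr x) * RInt (fun t => 2 * v x t * w x t) 0 T)
   <= F1x - m ^ 2 / 4 * F2x.
Proof.
  intros HT Hm Hx Hfr Hhd Cv Cw H1 H2.
  apply RInt_eq_is in H1. apply RInt_eq_is in H2.
  assert (E2 : ex_RInt (fun t => 2 * v x t * w x t) 0 T).
  { apply (ex_RInt_slice (fun a b => 2 * v a b * w a b)); [lra|]. intros b.
    apply continuity_2d_pt_mult. apply continuity_2d_pt_mult. apply continuity_2d_pt_const.
    apply Cv; auto. apply Cw; auto. }
  apply (RInt_correct (V := R_CompleteNormedModule)) in E2.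
  rewrite (is_RInt_unique _ _ _ _ H2).
  set (I2 := RInt (fun t => 2 * v x t * w x t) 0 T) in *.
  set (s := sqrt (fr x)).
  assert (Hs : s * s = fr x) by (apply sqrt_sqrt; lra).
  assert (Hs0 : 0 < s) by (apply sqrt_lt_R0; auto).
  apply (is_RInt_le (fun t => - (m / 2) * (hd x * v x t ^ 2 + s * (2 * v x t * w x t)))
      (fun t => grad_sq (fr x) (w x t) (ut x t) - m ^ 2 / 4 * v x t ^ 2) 0 T); [lra| | |].
  - apply (is_RInt_scal (V := R_NormedModule) (fun t => hd x * v x t ^ 2 + s * (2 * v x t * w x t)) 0 T (- (m / 2))).
    apply (is_RInt_plus (V := R_NormedModule) (fun t => hd x * v x t ^ 2) (fun t => s * (2 * v x t * w x t))).
    apply (is_RInt_scal (V := R_NormedModule) (fun t => v x t ^ 2)). auto.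
    apply (is_RInt_scal (V := R_NormedModule) (fun t => 2 * v x t * w x t)). auto.
  - apply (is_RInt_minus (V := R_NormedModule) (fun t => grad_sq (fr x) (w x t) (ut x t)) (fun t => m ^ 2 / 4 * v x t ^ 2)).
    auto. apply (is_RInt_scal (V := R_NormedModule) (fun t => v x t ^ 2)). auto.
  - intros t _. unfold grad_sq.
    assert (0 <= ut x t ^ 2 / fr x) by (apply Rmult_le_pos; [apply pow2_ge_0| left; apply Rinv_0_lt_compat; lra]).
    assert (0 <= (s * w x t + m / 2 * v x t) ^ 2) by apply pow2_ge_0.
    assert (0 <= (m / 2 * (hd x - m)) * v x t ^ 2) by (apply Rmult_le_pos; [nra| apply pow2_ge_0]).
    assert (Hid : s * s * w x t ^ 2 - m ^ 2 / 4 * v x t ^ 2 - - (m / 2) * (hd x * v x t ^ 2 + s * (2 * v x t * w x t))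
       = (s * w x t + m / 2 * v x t) ^ 2 + (m / 2 * (hd x - m)) * v x t ^ 2).
    { clearbody s. field. }
    rewrite Hs in Hid. lra.
Qed.

Lemma core (r0 Rm T m : R) (fr hd : R -> R) (v w ut : R -> R -> R) (F1 F2 : R -> R) (A1 A2 : R) :
  0 < T -> 0 < m -> r0 < Rm ->
  (forall x, r0 < x -> 0 < fr x) ->
  (forall x, r0 < x -> derivable_pt_lim (fun s => sqrt (fr s)) x (hd x)) ->
  (forall x, r0 < x -> continuity_pt hd x) ->
  (forall x, r0 < x -> m <= hd x) ->
  (forall a b, r0 < a -> continuity_2d_pt v a b) ->
  (forall a b, r0 < a -> continuity_2d_pt w a b) ->
  (forall a b, r0 < a -> derivable_pt_lim (fun s => v s b) a (w a b)) ->
  (forall t, v Rm t = 0) ->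
  (forall x, r0 < x -> RInt_eq (fun t => grad_sq (fr x) (w x t) (ut x t)) 0 T (F1 x)) ->
  (forall x, r0 < x -> RInt_eq (fun t => v x t ^ 2) 0 T (F2 x)) ->
  RInt_eq F1 r0 Rm A1 -> RInt_eq F2 r0 Rm A2 ->
  m ^ 2 / 4 * A2 <= A1.
Proof.
  intros HT Hm HR Hfr Dh Ch Hhd Cv Cw Dv Hv0 HF1 HF2 HA1 HA2.
  set (G := fun y => - (m / 2) * (sqrt (fr y) * RInt (fun t => v y t ^ 2) 0 T)).
  set (G' := fun y => - (m / 2) * (hd y * RInt (fun t => v y t ^ 2) 0 T
        + sqrt (fr y) * RInt (fun t => 2 * v y t * w y t) 0 T)).
  set (g := fun y => F1 y - m ^ 2 / 4 * F2 y).
  apply RInt_eq_is in HA1. apply RInt_eq_is in HA2.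
  assert (Hg : is_RInt g r0 Rm (A1 - m ^ 2 / 4 * A2)).
  { apply (is_RInt_minus (V := R_NormedModule) F1 (fun y => m ^ 2 / 4 * F2 y)). auto.
    apply (is_RInt_scal (V := R_NormedModule) F2). auto. }
  assert (Hexg : ex_RInt g r0 Rm) by (eexists; eauto).
  assert (Hpart : forall a, r0 < a < Rm -> 0 <= RInt g a Rm).
  { intros a Ha.
    assert (HD : forall y, a <= y <= Rm -> is_derive G y (G' y) /\ continuity_pt G' y).
    { intros y Hy. apply (core_G r0 T m fr hd v w y); auto; lra. }
    assert (HI : is_RInt G' a Rm (G Rm - G a)).
    { apply (is_RInt_derive (V := R_CompleteNormedModule) G G' a Rm).
      - intros y Hy. rewrite Rmin_left, Rmax_right in Hy by lra. apply HD; auto.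
      - intros y Hy. rewrite Rmin_left, Rmax_right in Hy by lra. apply continuity_pt_filterlim. apply HD; auto. }
    assert (Hexa : ex_RInt g a Rm) by (apply (ex_RInt_Chasles_2 (V := R_CompleteNormedModule) g r0); [lra|auto]).
    assert (Hle : G Rm - G a <= RInt g a Rm).
    { apply (is_RInt_le G' g a Rm); [lra| auto | apply (RInt_correct (V := R_CompleteNormedModule)); auto |].
      intros y Hy. unfold G', g. apply (core_P r0 T m fr hd v w ut y); auto; try lra.
      apply Hfr; lra. apply Hhd; lra. apply HF1; lra. apply HF2; lra. }
    assert (HGR : G Rm = 0).
    { assert (HI0 : RInt (fun t => v Rm t ^ 2) 0 T = 0).
      { rewrite (RInt_ext (fun t => v Rm t ^ 2) (fun _ => 0)).
        - rewrite RInt_const. apply (scal_zero_r (K := R_AbsRing) (V := R_NormedModule)).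
        - intros t _. rewrite Hv0. simpl. apply Rmult_0_l. }
      unfold G. rewrite HI0. ring. }
    assert (HGa : G a <= 0).
    { unfold G. assert (0 <= RInt (fun t => v a t ^ 2) 0 T).
      { apply RInt_ge_0; [lra| |intros; apply pow2_ge_0].
        apply (ex_RInt_slice (fun a b => v a b ^ 2)); [lra|]. intros b. apply cont2_sq. apply Cv; lra. }
      pose proof (sqrt_pos (fr a)).
      assert (0 <= sqrt (fr a) * RInt (fun t => v a t ^ 2) 0 T) by (apply Rmult_le_pos; auto).
      nra. }
    lra. }
  set (gh := fun y => if Rlt_dec y r0 then 0 else g y).
  assert (E1 : ex_RInt gh (r0 - 1) r0).
  { apply (ex_RInt_ext (fun _ => 0)); [|apply (ex_RInt_const (V := R_NormedModule))].
    intros y Hy. rewrite Rmin_left, Rmax_right in Hy by lra. unfold gh.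
    destruct (Rlt_dec y r0); [reflexivity| lra]. }
  assert (E2 : ex_RInt gh r0 Rm).
  { apply (ex_RInt_ext g); auto. intros y Hy. rewrite Rmin_left, Rmax_right in Hy by lra. unfold gh.
    destruct (Rlt_dec y r0); [lra|reflexivity]. }
  assert (E3 : ex_RInt gh (r0 - 1) Rm) by (apply (ex_RInt_Chasles (V := R_CompleteNormedModule)) with r0; auto).
  assert (Hc : continuous (fun z => RInt gh z Rm) r0).
  { apply (continuous_RInt_2 gh r0 Rm). 
    assert (Hp : 0 < Rmin 1 (Rm - r0)) by (apply Rmin_pos; lra).
    exists (mkposreal _ Hp). intros z Hz. change (Rabs (z - r0) < Rmin 1 (Rm - r0)) in Hz.
    pose proof (Rmin_l 1 (Rm - r0)). pose proof (Rmin_r 1 (Rm - r0)). apply Rabs_def2 in Hz.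
    apply (RInt_correct (V := R_CompleteNormedModule)).
    apply (ex_RInt_Chasles_2 (V := R_CompleteNormedModule) gh (r0 - 1)); [lra|auto]. }
  assert (Eq0 : RInt gh r0 Rm = RInt g r0 Rm).
  { apply RInt_ext. intros y Hy. rewrite Rmin_left, Rmax_right in Hy by lra. unfold gh.
    destruct (Rlt_dec y r0); [lra|reflexivity]. }
  assert (Eqa : forall a, r0 < a < Rm -> RInt gh a Rm = RInt g a Rm).
  { intros a Ha. apply RInt_ext. intros y Hy. rewrite Rmin_left, Rmax_right in Hy by lra. unfold gh.
    destruct (Rlt_dec y r0); [lra|reflexivity]. }
  rewrite (is_RInt_unique _ _ _ _ Hg) in Eq0.
  destruct (Rle_or_lt 0 (A1 - m ^ 2 / 4 * A2)) as [Hok|Hneg]; [lra|].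
  exfalso.
  apply continuity_pt_filterlim in Hc. rewrite continuity_pt_locally in Hc.
  assert (He : 0 < - (A1 - m ^ 2 / 4 * A2) / 2) by lra.
  destruct (Hc (mkposreal _ He)) as [d Hd]. simpl in Hd.
  set (a := r0 + Rmin d (Rm - r0) / 2).
  assert (Hmd : 0 < Rmin d (Rm - r0)) by (apply Rmin_pos; [apply cond_pos|lra]).
  pose proof (Rmin_l d (Rm - r0)). pose proof (Rmin_r d (Rm - r0)).
  assert (Ha : r0 < a < Rm) by (unfold a; lra).
  assert (Hball : ball r0 d a).
  { change (Rabs (a - r0) < d). rewrite Rabs_right; unfold a; lra. }
  specialize (Hd a Hball). rewrite Eq0, (Eqa a Ha) in Hd.
  specialize (Hpart a Ha). apply Rabs_def2 in Hd. lra.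
Qed.

Lemma deriv_mul_const (f : R -> R) x l c : derivable_pt_lim f x l -> derivable_pt_lim (fun s => f s * c) x (l * c).
Proof.
  intros H. apply is_derive_Reals. apply is_derive_Reals in H.
  apply (is_derive_ext (fun s => c * f s)). intros; apply Rmult_comm.
  replace (l * c) with (c * l) by ring. apply is_derive_scal. auto.
Qed.

Lemma cont_cos_lin (kap b : R) : continuity_pt (fun t => cos (kap * t)) b.
Proof.
  apply continuity_pt_filterlim. apply (ex_derive_continuous (K := R_AbsRing) (V := R_NormedModule) (fun t => cos (kap * t))). auto_derive. auto.
Qed.

Lemma cont_sin_lin (kap b : R) : continuity_pt (fun t => sin (kap * t)) b.
Proof.
  apply continuity_pt_filterlim. apply (ex_derive_continuous (K := R_AbsRing) (V := R_NormedModule) (fun t => sin (kap * t))). auto_derive. auto.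
Qed.

Lemma fp_cont k l mu x : 0 < x -> continuity_pt (fp k l mu) x.
Proof.
  intros Hx. apply continuity_pt_filterlim. apply (ex_derive_continuous (K := R_AbsRing) (V := R_NormedModule) (fp k l mu)). unfold fp.
  assert (0 < x ^ k) by (apply pow_lt; auto).
  auto_derive. apply Rgt_not_eq. apply Rmult_lt_0_compat; [apply Rmult_lt_0_compat|]; lra.
Qed.

Lemma hd_cont k l K mu x : 0 < l -> 0 < x -> 0 < ff k l K mu x ->
  continuity_pt (fun y => fp k l mu y / (2 * sqrt (ff k l K mu y))) x.
Proof.
  intros Hl Hx Hf.
  apply (continuity_pt_div (fp k l mu) (fun y => 2 * sqrt (ff k l K mu y))).
  - apply fp_cont; auto.
  - apply (continuity_pt_scal (fun y => sqrt (ff k l K mu y))).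
    apply derivable_continuous_pt. exists (fp k l mu x / (2 * sqrt (ff k l K mu x))).
    apply sqrt_ff_deriv; auto.
  - assert (0 < sqrt (ff k l K mu x)) by (apply sqrt_lt_R0; auto). lra.
Qed.

Lemma v_cont (u : R -> R -> R) (rho : R -> R) kap a b : continuous2 u -> continuity_pt rho a ->
  continuity_2d_pt (fun r t => in_rt rho kap u r t) a b.
Proof.
  intros Cu Cr. unfold in_rt.
  apply (cont2_comp u (fun r t => rho r * cos (kap * t)) (fun r t => rho r * sin (kap * t))); auto.
  - apply continuity_2d_pt_mult. apply cont_1d_x; auto. apply (cont_1d_y (fun t => cos (kap * t))). apply cont_cos_lin.
  - apply continuity_2d_pt_mult. apply cont_1d_x; auto. apply (cont_1d_y (fun t => sin (kap * t))). apply cont_sin_lin.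
Qed.

Lemma ur_formula (u ux uy : R -> R -> R) (rho : R -> R) kap a b dr ur :
  (forall x y, derivable_pt_lim (fun z => u z y) x (ux x y)) ->
  (forall x y, derivable_pt_lim (fun z => u x z) y (uy x y)) ->
  continuous2 ux -> continuous2 uy ->
  derivable_pt_lim rho a dr ->
  derivable_pt_lim (fun s => in_rt rho kap u s b) a ur ->
  ur = ux (rho a * cos (kap * b)) (rho a * sin (kap * b)) * (dr * cos (kap * b))
     + uy (rho a * cos (kap * b)) (rho a * sin (kap * b)) * (dr * sin (kap * b)).
Proof.
  intros Dx Dy Cx Cy Dr Du.
  eapply uniqueness_limite. exact Du. unfold in_rt.
  apply (derivable_pt_lim_comp_2d u (fun s => rho s * cos (kap * b)) (fun s => rho s * sin (kap * b))).
  - apply diff_partials; auto.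
  - apply deriv_mul_const; auto.
  - apply deriv_mul_const; auto.
Qed.

Theorem mainTheorem8 (n : nat) (l K mu r0 : R) :
  (2 <= n)%nat -> 0 < l ->
  (K = -1 \/ K = 0 \/ K = 1) ->
  ((K = 0 \/ K = 1) -> 0 < mu) ->
  (K = -1 -> mu_min n l < mu) ->
  0 < r0 -> fBH n l K mu r0 = 0 ->
  (forall r, r0 < r -> fBH n l K mu r <> 0) ->
  exists lam : R,
    is_glb (lam_set n l K mu r0) lam /\
    ((K = -1 \/ K = 0) -> lam = 1) /\
    (K = 1 -> 0 < lam < 1) /\
    (forall (fp0 : R) (rho : R -> R),
      derivable_pt_lim (fBH n l K mu) r0 fp0 ->
      rho r0 = 0 ->
      (forall eps, 0 < eps -> exists delta, 0 < delta /\
         forall r, r0 <= r < r0 + delta -> Rabs (rho r) < eps) ->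
      (forall r, r0 < r -> derivable_pt_lim rho r (1 / sqrt (fBH n l K mu r))) ->
      forall u : R -> R -> R,
        smooth2 u -> compact_support2 u ->
        forall ur ut : R -> R -> R,
          (forall r t, r0 < r ->
             derivable_pt_lim (fun s => in_rt rho (fp0 / 2) u s t) r (ur r t)) ->
          (forall r t, r0 < r ->
             derivable_pt_lim (fun s => in_rt rho (fp0 / 2) u r s) t (ut r t)) ->
          forall Rmax : R, r0 < Rmax ->
          (forall r t, Rmax <= r -> in_rt rho (fp0 / 2) u r t = 0) ->
          forall (F1 F2 : R -> R) (A1 A2 : R),
            (forall r, r0 < r ->
               RInt_eq (fun t => grad_sq (fBH n l K mu r) (ur r t) (ut r t))
                 0 (4 * PI / fp0) (F1 r)) ->
            (forall r, r0 < r ->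
               RInt_eq (fun t => (in_rt rho (fp0 / 2) u r t) ^ 2)
                 0 (4 * PI / fp0) (F2 r)) ->
            RInt_eq F1 r0 Rmax A1 ->
            RInt_eq F2 r0 Rmax A2 ->
            lam ^ 2 / (4 * l ^ 2) * A2 <= A1).
Proof.
  intros Hn Hl HK Hmu1 Hmu2 Hr0 Hf0 Hnz.
  destruct n as [|[|k]]; [exfalso; lia| exfalso; lia|].
  change (fBH (S (S k)) l K mu) with (ff k l K mu) in *.
  destruct (lam_exists k l K mu r0 Hl HK Hmu1 Hmu2 Hr0 Hf0 Hnz) as [lam [Hglb [HA [HB [Hlam Hle]]]]].
  exists lam. split; [exact Hglb|]. split; [exact HA|]. split; [exact HB|].
  intros fp0 rho Hfp0 Hrho0 Hrhoc Hrho u Hsm Hcs ur ut Hur Hut Rm HRm Hv0 F1 F2 A1 A2 HF1 HF2 HA1 HA2.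
  assert (HK' : -1 <= K) by (destruct HK as [->|[->| ->]]; lra).
  pose proof (ff_pos k l K mu r0 Hl HK' Hr0 Hnz) as Hpos.
  assert (Efp : fp0 = fp k l mu r0).
  { eapply uniqueness_limite. exact Hfp0. apply ff_deriv; auto. }
  pose proof (fp_r0_pos k l K mu r0 Hl HK Hmu1 Hmu2 Hr0 Hf0 Hnz) as Hfpp.
  assert (Hfp0p : 0 < fp0) by lra.
  set (m := lam / l).
  assert (Hm : 0 < m) by (unfold m; apply Rdiv_lt_0_compat; lra).
  replace (lam ^ 2 / (4 * l ^ 2) * A2) with (m ^ 2 / 4 * A2) by (unfold m; field; lra).
  destruct (Hsm 1%nat) as [Cu [ux [uy [Dx [Dy [Cx Cy]]]]]]. simpl in Cx, Cy.
  assert (Crho : forall a, r0 < a -> continuity_pt rho a).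
  { intros a Ha. apply derivable_continuous_pt. eexists. apply Hrho; auto. }
  apply (core r0 Rm (4 * PI / fp0) m (ff k l K mu) (fun y => fp k l mu y / (2 * sqrt (ff k l K mu y)))
           (fun r t => in_rt rho (fp0 / 2) u r t) ur ut F1 F2 A1 A2).
  - apply Rdiv_lt_0_compat; [pose proof PI_RGT_0; lra| auto].
  - auto.
  - auto.
  - auto.
  - intros x Hx. apply sqrt_ff_deriv; auto; lra.
  - intros x Hx. apply hd_cont; auto; lra.
  - intros x Hx. specialize (Hle x Hx). unfold Hf in Hle. unfold m.
    replace (l * fp k l mu x / (2 * sqrt (ff k l K mu x))) with (l * (fp k l mu x / (2 * sqrt (ff k l K mu x)))) in Hle
      by (unfold Rdiv; ring).
    apply Rmult_le_reg_l with l; auto. replace (l * (lam / l)) with lam by (field; lra). auto.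
  - intros a b Ha. apply v_cont; auto.
  - intros a b Ha.
    apply continuity_2d_pt_ext_loc with
      (fun a b => ux (rho a * cos (fp0 / 2 * b)) (rho a * sin (fp0 / 2 * b)) * (1 / sqrt (ff k l K mu a) * cos (fp0 / 2 * b))
        + uy (rho a * cos (fp0 / 2 * b)) (rho a * sin (fp0 / 2 * b)) * (1 / sqrt (ff k l K mu a) * sin (fp0 / 2 * b))).
    + apply locally_2d_impl with (fun a b => r0 < a); [|apply locally_2d_gt; auto].
      apply locally_2d_forall. intros a' b' Ha'. symmetry.
      apply (ur_formula u ux uy rho (fp0 / 2) a' b'); auto.
    + assert (Cs : continuity_pt (fun y => 1 / sqrt (ff k l K mu y)) a).
      { apply (continuity_pt_div (fun _ => 1) (fun y => sqrt (ff k l K mu y))).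
        apply continuity_pt_const. intros p q; auto.
        apply derivable_continuous_pt. eexists. apply sqrt_ff_deriv; auto; lra.
        assert (0 < sqrt (ff k l K mu a)) by (apply sqrt_lt_R0; apply Hpos; auto). lra. }
      apply continuity_2d_pt_plus; apply continuity_2d_pt_mult.
      * apply (cont2_comp ux); auto.
        apply continuity_2d_pt_mult. apply cont_1d_x; auto. apply (cont_1d_y (fun t => cos (fp0 / 2 * t))). apply cont_cos_lin.
        apply continuity_2d_pt_mult. apply cont_1d_x; auto. apply (cont_1d_y (fun t => sin (fp0 / 2 * t))). apply cont_sin_lin.
      * apply continuity_2d_pt_mult. apply (cont_1d_x (fun y => 1 / sqrt (ff k l K mu y))); auto.
        apply (cont_1d_y (fun t => cos (fp0 / 2 * t))). apply cont_cos_lin.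
      * apply (cont2_comp uy); auto.
        apply continuity_2d_pt_mult. apply cont_1d_x; auto. apply (cont_1d_y (fun t => cos (fp0 / 2 * t))). apply cont_cos_lin.
        apply continuity_2d_pt_mult. apply cont_1d_x; auto. apply (cont_1d_y (fun t => sin (fp0 / 2 * t))). apply cont_sin_lin.
      * apply continuity_2d_pt_mult. apply (cont_1d_x (fun y => 1 / sqrt (ff k l K mu y))); auto.
        apply (cont_1d_y (fun t => sin (fp0 / 2 * t))). apply cont_sin_lin.
  - intros a b Ha. apply Hur; auto.
  - intros t. apply Hv0. lra.
  - exact HF1.
  - exact HF2.
  - exact HA1.
  - exact HA2.
Qed.
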